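(* Let $p$ be a prime, $V$ a finite-dimensional $\mathbb{F}_p$-vector space, $K \subseteq \mathcal{A}(V)$ a symplectic subspace, and $\beta: V \times V \to K^*$ a bilinear map with $\omega_K(v,w) = \beta(v,w)-\beta(w,v)$ for all $v,w \in V$. Then the irreducible complex representations of the generalized Heisenberg group $H = H(V,K,\beta)$ are exactly the following, up to isomorphism: (i) $|V|$ one-dimensional representations, one for each character of $V$ (pulled back along $H \to V$, $(v,t)\mapsto v$); (ii) $|K|-1$ representations of dimension $\sqrt{|V|}$, one for each nontrivial character $\psi: K^* \to \mathbb{C}^\times$, namely the one on which the central subgroup $K^*=\{(0,t)\}$ acts by $\psi$.
   Context: For an $\mathbb{F}_p$-vector space $V$, $\mathcal{A}(V)$ is the space of alternating bilinear forms $V\times V \to \mathbb{F}_p$. A subspace $K\subseteq\mathcal{A}(V)$ is symplectic if every nonzero element of $K$ is non-degenerate. For a subspace $K$, $\omega_K: V \times V \to K^*$ is defined by $\omega_K(v,w)(k) = k(v,w)$ for $k\in K$. The group $H(V,K,\beta)$ has underlying set $V \times K^*$ with multiplication $(v,t)(v',t') = (v+v', t+t'+\beta(v,v'))$; when $K$ is symplectic it is called a generalized Heisenberg group. Characters of the $\mathbb{F}_p$-vector spaces are homomorphisms to $\mathbb{C}^\times$. *)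

(* Defs.v *)
From HB Require Import structures.
From mathcomp Require Import all_boot all_order all_algebra all_fingroup all_solvable all_field all_character.
Set Implicit Arguments. Unset Strict Implicit. Unset Printing Implicit Defensive.
Import GRing.Theory Num.Theory.
Local Open Scope ring_scope.

(* V = 'rV['F_p]_n (coordinates).  A bilinear form V x V -> F_p is given by
   its Gram matrix M : form M v w = v M w^T. *)
Definition form (p n : nat) (M : 'M['F_p]_n) (v w : 'rV['F_p]_n) : 'F_p :=
  (v *m M *m w^T) 0 0.

Definition alternating (p n : nat) (M : 'M['F_p]_n) : Prop :=
  forall v, form M v v = 0.

Definition nondegenerate (p n : nat) (M : 'M['F_p]_n) : Prop :=
  forall v, (forall w, form M v w = 0) -> v = 0.

(* K = span of the basis (A i)_{i<m}; an element of K is \sum_i c_i A_i.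
   K symplectic: every nonzero element of K is non-degenerate. *)
Definition symplectic (p n m : nat) (A : 'I_m -> 'M['F_p]_n) : Prop :=
  forall c : 'rV['F_p]_m, \sum_i c 0 i *: A i != 0 -> nondegenerate (\sum_i c 0 i *: A i).

(* K^* is identified with 'rV['F_p]_m via t |-> (t(A_i))_i (dual basis).
   omega_K(v,w) in K^* has coordinates (A_i(v,w))_i. *)
Definition omega (p n m : nat) (A : 'I_m -> 'M['F_p]_n) (v w : 'rV['F_p]_n)
  : 'rV['F_p]_m := \row_i form (A i) v w.

(* A bilinear map beta : V x V -> K^* = F_p^m, given by its m coordinate
   Gram matrices (every bilinear map is of this form). *)
Definition beta (p n m : nat) (B : 'I_m -> 'M['F_p]_n) (v w : 'rV['F_p]_n)
  : 'rV['F_p]_m := \row_i form (B i) v w.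

Lemma formDl p n (M : 'M['F_p]_n) u v w : form M (u + v) w = form M u w + form M v w.
Proof. by rewrite /form !mulmxDl mxE. Qed.
Lemma formDr p n (M : 'M['F_p]_n) u v w : form M u (v + w) = form M u v + form M u w.
Proof. by rewrite /form linearD /= mulmxDr mxE. Qed.
Lemma formNl p n (M : 'M['F_p]_n) u w : form M (- u) w = - form M u w.
Proof. by rewrite /form !mulNmx mxE. Qed.

Lemma betaDl p n m (B : 'I_m -> 'M['F_p]_n) u v w :
  beta B (u + v) w = beta B u w + beta B v w.
Proof. by apply/rowP => i; rewrite !mxE formDl. Qed.
Lemma betaDr p n m (B : 'I_m -> 'M['F_p]_n) u v w :
  beta B u (v + w) = beta B u v + beta B u w.
Proof. by apply/rowP => i; rewrite !mxE formDr. Qed.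
Lemma betaNl p n m (B : 'I_m -> 'M['F_p]_n) u w :
  beta B (- u) w = - beta B u w.
Proof. by apply/rowP => i; rewrite !mxE formNl. Qed.

Definition heis (p n m : nat) (B : 'I_m -> 'M['F_p]_n) : Type :=
  ('rV['F_p]_n * 'rV['F_p]_m)%type.

Section Heis.
Variables (p n m : nat) (B : 'I_m -> 'M['F_p]_n).
HB.instance Definition _ := Finite.on (heis B).

Definition heis_mul (x y : heis B) : heis B :=
  (x.1 + y.1, x.2 + y.2 + beta B x.1 y.1).
Definition heis_one : heis B := (0, 0).
Definition heis_inv (x : heis B) : heis B := (- x.1, - x.2 + beta B x.1 x.1).

Lemma heis_mulA : associative heis_mul.
Proof.
case=> a s [b t] [c u]; rewrite /heis_mul /=; congr (_, _); first by rewrite addrA.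
rewrite betaDl betaDr.
move: (beta B a b) (beta B a c) (beta B b c) => x1 y1 z1.
rewrite -!addrA; congr (_ + _); congr (_ + _).
rewrite [RHS]addrCA; congr (_ + _).
by rewrite addrC -addrA.
Qed.

Lemma heis_mul1 : left_id heis_one heis_mul.
Proof.
case=> a s; rewrite /heis_mul /heis_one /=; congr (_, _); first by rewrite add0r.
have -> : beta B 0 a = 0 by apply/rowP => i; rewrite !mxE /form !mul0mx mxE.
by rewrite add0r addr0.
Qed.

Lemma heis_mulV : left_inverse heis_one heis_inv heis_mul.
Proof.
case=> a s; rewrite /heis_mul /heis_inv /heis_one /=; congr (_, _); first by rewrite addNr.
by rewrite betaNl addrAC addrK addNr.
Qed.

HB.instance Definition _ := Finite_isGroup.Build (heis B) heis_mulA heis_mul1 heis_mulV.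

Definition hproj (h : heis B) : 'rV['F_p]_n := h.1.
Definition hcent (t : 'rV['F_p]_m) : heis B := (0, t).
End Heis.

Definition is_character (T : zmodType) (f : T -> algC) : Prop :=
  (forall x, f x != 0) /\ (forall x y, f (x + y) = f x * f y).

Definition nontrivial_char (T : zmodType) (f : T -> algC) : Prop :=
  exists x, f x != 1.

(* Main.v *)
Require Import Defs.
From HB Require Import structures.
From mathcomp Require Import all_boot all_order all_algebra all_fingroup all_solvable all_field all_character.
Import GRing.Theory Num.Theory.
From mathcomp Require Import zify.
From Stdlib Require Import FunctionalExtensionality.
Local Open Scope ring_scope.

Section H.
Variables (p n m : nat) (B : 'I_m -> 'M['F_p]_n).
Local Notation H := (heis B).
Local Notation G := [set: heis B]%G.

Lemma hmulE (x y : H) : (x * y)%g = (x.1 + y.1, x.2 + y.2 + beta B x.1 y.1).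
Proof. by []. Qed.

Lemma beta0l v : beta B 0 v = 0.
Proof. by apply/rowP => i; rewrite !mxE /Defs.form !mul0mx mxE. Qed.
Lemma beta0r v : beta B v 0 = 0.
Proof. by apply/rowP => i; rewrite !mxE /Defs.form trmx0 mulmx0 mxE. Qed.

Lemma hcentM t s : (hcent B t * hcent B s)%g = hcent B (t + s).
Proof. by rewrite hmulE /hcent /= addr0 beta0l addr0. Qed.

Lemma hcent0 : hcent B 0 = 1%g.
Proof. by []. Qed.

Lemma hcentC t (x : H) : (hcent B t * x)%g = (x * hcent B t)%g.
Proof. case: x => v s; rewrite !hmulE /hcent /=; congr (_, _); first by rewrite add0r addr0.
by rewrite beta0l beta0r !addr0 addrC. Qed.

Lemma hdecomp (x : H) : x = (((x.1, 0) : H) * hcent B x.2)%g.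
Proof. by case: x => v t; rewrite hmulE /hcent /= beta0r addr0 add0r addr0. Qed.

Lemma hcomm (w v : 'rV['F_p]_n) t :
  (((w, 0) : H) * (v, t))%g = (((v, t) : H) * (w, 0) * hcent B (beta B w v - beta B v w))%g.
Proof.
rewrite !hmulE /hcent /= beta0r !addr0 add0r; congr (_, _); first by rewrite addrC.
by rewrite [beta B w v - _]addrC addrA addrK.
Qed.

Lemma hvV v w : (((v, 0) : H) * (w, 0))%g = (((v + w, 0) : H) * hcent B (beta B v w))%g.
Proof. by rewrite !hmulE /hcent /= beta0r !addr0 !add0r. Qed.

End H.

Section R.
Variables (p n m : nat) (B : 'I_m -> 'M['F_p]_n).
Local Notation H := (heis B).
Local Notation G := [set: heis B]%G.
Variables (d : nat) (rho : mx_representation algC G d).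

Lemma rhoM (x y : H) : rho (x * y)%g = rho x *m rho y.
Proof. exact: repr_mxM (in_setT x) (in_setT y). Qed.

Lemma center_scalar : mx_irreducible rho ->
  exists c, is_character c /\ forall t, rho (hcent B t) = (c t)%:M.
Proof.
move=> irr.
have d_gt0 : (0 < d)%N by case/mx_irrP: irr.
have absirr : mx_absolutely_irreducible rho := group_closure_closed_field irr.
pose i0 := Ordinal d_gt0.
have sc t : rho (hcent B t) = (rho (hcent B t) i0 i0)%:M.
  have /is_scalar_mxP[a ->] : is_scalar_mx (rho (hcent B t)).
    apply: mx_abs_irr_cent_scalar absirr _ _; apply/centgmxP => x _.
    by rewrite -!rhoM hcentC.
  by rewrite mxE eqxx mulr1n.
exists (fun t => rho (hcent B t) i0 i0); split=> //; split.
  move=> t; apply/eqP => c0.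
  have : rho (hcent B t) *m rho (hcent B (-t)) = 1%:M.
    by rewrite -rhoM hcentM subrr hcent0 repr_mx1.
  rewrite sc c0 (_ : (0 : algC)%:M = 0 :> 'M_d) ?mul0mx; last by apply/matrixP => i j; rewrite !mxE mul0rn.
  move/(congr1 (fun M : 'M_d => M i0 i0)); rewrite !mxE eqxx /= => /eqP.
  by rewrite eq_sym oner_eq0.
move=> t s; have := rhoM (hcent B t) (hcent B s).
rewrite hcentM (sc (t + s)) (sc t) (sc s) -scalar_mxM.
by move/(congr1 (fun M : 'M_d => M i0 i0)); rewrite !mxE eqxx !mulr1n.
Qed.
End R.

Lemma form_sum p n m (c : 'I_m -> 'F_p) (M : 'I_m -> 'M['F_p]_n) v w :
  Defs.form (\sum_i c i *: M i) v w = \sum_i c i * Defs.form (M i) v w.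
Proof.
rewrite /Defs.form mulmx_sumr mulmx_suml summxE; apply: eq_bigr => i _.
by rewrite -scalemxAr -scalemxAl mxE.
Qed.

Lemma form_skew p n (M : 'M['F_p]_n) : alternating M ->
  forall v w, Defs.form M v w = - Defs.form M w v.
Proof.
move=> alt v w; have := alt (v + w); rewrite Defs.formDl !Defs.formDr alt alt add0r addr0.
by move/eqP; rewrite addr_eq0 => /eqP.
Qed.

Section Lin.
Variables (p n m : nat) (A : 'I_m -> 'M['F_p]_n).
Hypotheses (A_alt : forall i, alternating (A i))
  (A_free : forall c : 'rV['F_p]_m, \sum_i c 0 i *: A i = 0 -> c = 0)
  (K_symp : symplectic A).

Lemma omega_surj v : v != 0 -> forall x, exists w, omega A w v = x.
Proof.
move=> nzv x.
pose N : 'M['F_p]_(n, m) := \matrix_(j, i) (A i *m v^T) j 0.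
have omN w : omega A w v = w *m N.
  apply/rowP=> i; rewrite !mxE /Defs.form -mulmxA mxE; apply: eq_bigr => j _.
  by rewrite !mxE.
have fullN : row_full N.
  suff: row_free N^T by rewrite /row_full -mxrank_tr.
  rewrite -kermx_eq0; apply/eqP/row_matrixP => k; rewrite row0.
  set c := row k (kermx N^T).
  have cN : c *m N^T = 0 by rewrite /c -row_mul mulmx_ker row0.
  apply: A_free; apply/eqP; apply: contraT => nzM.
  have ndM := @K_symp c nzM.
  have altM : alternating (\sum_i c 0 i *: A i).
    by move=> u; rewrite form_sum big1 // => i _; rewrite A_alt mulr0.
  case/eqP: nzv; apply: ndM => w; rewrite form_skew // form_sum.
  have -> : \sum_i c 0 i * Defs.form (A i) w v = ((w *m N) *m c^T) 0 0.
    rewrite mxE; apply: eq_bigr => i _; rewrite -omN !mxE mulrC.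
    by [].
  by rewrite -mulmxA -[N]trmxK -trmx_mul cN trmx0 mulmx0 mxE oppr0.
have : (x <= N)%MS by apply: submx_full.
by case/submxP => w ->; exists w; rewrite omN.
Qed.
End Lin.

Section Tr.
Variables (p n m : nat) (A B : 'I_m -> 'M['F_p]_n).
Hypotheses (A_alt : forall i, alternating (A i))
  (A_free : forall c : 'rV['F_p]_m, \sum_i c 0 i *: A i = 0 -> c = 0)
  (K_symp : symplectic A)
  (hB : forall v w, beta B v w - beta B w v = omega A v w).
Local Notation H := (heis B).
Local Notation G := [set: heis B]%G.
Variables (d : nat) (rho : mx_representation algC G d).

Lemma trace_zero (c : 'rV['F_p]_m -> algC)
  (hc : forall t, rho (hcent B t) = (c t)%:M) (nt : exists x, c x != 1) v t :
  v != 0 -> \tr (rho ((v, t) : H)) = 0.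
Proof.
move=> nzv; case: nt => x cx.
have [w hw] := @omega_surj _ _ _ _ A_alt A_free K_symp _ nzv x.
pose g : H := (w, 0); pose y : H := (v, t).
have e : rho g *m rho y = rho y *m rho g *m (c x)%:M.
  by rewrite -!rhoM -hc /g /y hcomm hB hw rhoM.
have : \tr (rho y) = c x * \tr (rho y).
  transitivity (\tr (rho (g^-1)%g *m (rho g *m rho y))).
    by rewrite mulmxA -rhoM mulVg repr_mx1 mul1mx.
  rewrite e mul_mx_scalar -scalemxAr mxtraceZ mxtrace_mulC -mulmxA -rhoM mulgV.
  by rewrite repr_mx1 mulmx1.
move/eqP; rewrite -{1}[\tr (rho y)]mul1r -subr_eq0 -mulrBl mulf_eq0 subr_eq0.
by rewrite eq_sym (negbTE cx) /= => /eqP.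
Qed.
End Tr.

Lemma char0 (T : zmodType) (f : T -> algC) : is_character f -> f 0 = 1.
Proof.
case=> nz mul; have := mul 0 0; rewrite addr0 => e.
by apply: (mulIf (nz 0)); rewrite mul1r -e.
Qed.

Lemma charN (T : zmodType) (f : T -> algC) x : is_character f -> f x * f (- x) = 1.
Proof. by move=> hf; rewrite -(proj2 hf) subrr char0. Qed.

Lemma hcentV p n m (B : 'I_m -> 'M['F_p]_n) t : ((hcent B t)^-1)%g = hcent B (- t).
Proof. by apply: (mulgI (hcent B t)); rewrite mulgV hcentM subrr. Qed.

Lemma sum_heis p n m (B : 'I_m -> 'M['F_p]_n) (F : heis B -> algC) :
  \sum_(x in [set: heis B]) F x = \sum_(v : 'rV['F_p]_n) \sum_(t : 'rV['F_p]_m) F (v, t).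
Proof.
rewrite (eq_bigl xpredT) => [|x]; last by rewrite in_setT.
rewrite pair_big /=; apply: eq_big => // -[v t] //.
Qed.

Section Norm.
Variables (p n m : nat) (A B : 'I_m -> 'M['F_p]_n).
Hypotheses (A_alt : forall i, alternating (A i))
  (A_free : forall c : 'rV['F_p]_m, \sum_i c 0 i *: A i = 0 -> c = 0)
  (K_symp : symplectic A)
  (hB : forall v w, beta B v w - beta B w v = omega A v w).
Local Notation H := (heis B).
Local Notation G := [set: heis B]%G.

Lemma cfRepr_heis d (rho : mx_representation algC G d) (c : 'rV['F_p]_m -> algC)
  (hc : forall t, rho (hcent B t) = (c t)%:M) (nt : exists x, c x != 1) (x : H) :
  cfRepr rho x = if x.1 == 0 then c x.2 *+ d else 0.
Proof.
rewrite cfunE in_setT mulr1n; case: x => v t /=.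
case: eqP => [-> | /eqP nzv]; last exact: (@trace_zero _ _ _ _ _ A_alt A_free K_symp hB _ _ _ hc nt _ _ nzv).
by rewrite -/(hcent B t) hc mxtrace_scalar.
Qed.

Lemma dim_sq d (rho : mx_representation algC G d) (c : 'rV['F_p]_m -> algC)
  (irrr : mx_irreducible rho) (cc : is_character c)
  (hc : forall t, rho (hcent B t) = (c t)%:M) (nt : exists x, c x != 1) :
  (d * d = #|{: 'rV['F_p]_n}|)%N.
Proof.
have irrchi : cfRepr rho \in irr G by apply/irr_reprP; exists (Representation rho).
have := irrWnorm irrchi; rewrite cfdotE sum_heis.
rewrite (bigD1 (0 : 'rV['F_p]_n)) //= [X in _ + X]big1 ?addr0 => [|v nzv]; last first.
  by apply: big1 => t _; rewrite (@cfRepr_heis _ _ c hc nt) /= (negbTE nzv) mul0r.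
have -> : \sum_(t : 'rV['F_p]_m) cfRepr rho (0, t) * (cfRepr rho (0, t))^*
          = (#|{: 'rV['F_p]_m}| * (d * d))%:R.
  rewrite (eq_bigr (fun _ => (d * d)%:R)) => [|t _].
    by rewrite sumr_const -mulrnA mulnC.
  rewrite -char_inv ?cfRepr_char // -/(hcent B t) hcentV !(@cfRepr_heis _ _ c hc nt) /= eqxx.
  by rewrite mulrnAl mulrnAr -mulrnA charN.
move=> e.
have G0 : (#|G|%:R : algC) != 0 by rewrite pnatr_eq0 -lt0n cardG_gt0.
move: (canRL (mulVKf G0) e); rewrite mulr1 cardsT card_prod => /eqP.
rewrite eqC_nat mulnC eqn_pmul2r ?cardG_gt0 //; first by move/eqP.
by rewrite -cardsT cardG_gt0.
Qed.
End Norm.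

Lemma char_sum p m (f : 'rV['F_p]_m -> algC) : is_character f ->
  \sum_t f t != 0 -> forall s, f s = 1.
Proof.
move=> [nz mul] S0 s.
have e : \sum_t f t = f s * \sum_t f t.
  rewrite mulr_sumr (reindex_inj (addrI s)) /=; apply: eq_bigr => t _.
  by rewrite mul.
move/eqP: e; rewrite -{1}[\sum_t f t]mul1r -subr_eq0 -mulrBl mulf_eq0 (negbTE S0) orbF.
by rewrite subr_eq0 eq_sym => /eqP.
Qed.

Lemma hcent_eq1 p n m (B : 'I_m -> 'M['F_p]_n) t : (hcent B t == 1%g) = (t == 0).
Proof.
apply/eqP/eqP => [e | ->]; last by [].
by have := congr1 snd e.
Qed.

Section Exist.
Variables (p n m : nat) (A B : 'I_m -> 'M['F_p]_n).
Local Notation H := (heis B).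
Local Notation G := [set: heis B]%G.

Lemma exists_rep (psi : 'rV['F_p]_m -> algC) : is_character psi ->
  exists d (rho : mx_representation algC G d),
    mx_irreducible rho /\ forall t, rho (hcent B t) = (psi t)%:M.
Proof.
move=> cpsi.
pose S := \sum_(t : 'rV['F_p]_m) psi (- t) * cfReg G (hcent B t).
have G0 : (#|G|%:R : algC) != 0 by rewrite pnatr_eq0 -lt0n cardG_gt0.
have S1 : S = #|G|%:R.
  rewrite /S (bigD1 0) //= big1 ?addr0 => [|t tnz].
    by rewrite oppr0 char0 // hcent0 cfRegE eqxx mul1r mulr1n.
  by rewrite cfRegE hcent_eq1 (negbTE tnz) mulr0n mulr0.
have S2 : S = \sum_i 'chi[G]_i 1%g * \sum_t psi (- t) * 'chi_i (hcent B t).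
  rewrite /S; under eq_bigr do rewrite cfReg_sum sum_cfunE mulr_sumr.
  rewrite exchange_big; apply: eq_bigr => i _; rewrite mulr_sumr.
  by apply: eq_bigr => t _; rewrite cfunE mulrCA.
have /existsP[i hi] : [exists i : Iirr G, \sum_t psi (- t) * 'chi_i (hcent B t) != 0].
  apply: contraT; rewrite negb_exists => /forallP all0.
  have : S = 0 by rewrite S2 big1 // => i _; rewrite (eqP (negbNE (all0 i))) mulr0.
  by rewrite S1 => /eqP; rewrite (negbTE G0).
have /irr_reprP[[d rho] irrr echi] := mem_irr i.
have [c [cc hc]] := @center_scalar _ _ _ B d rho irrr.
exists d, rho; split=> // t.
have chiE s : 'chi_i (hcent B s) = c s *+ d.
  by rewrite echi cfunE in_setT mulr1n /= hc mxtrace_scalar.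
have hs : \sum_t psi (- t) * c t != 0.
  apply: contraNneq hi => e; under eq_bigr do rewrite chiE mulrnAr.
  by rewrite sumrMnl e mul0rn.
have cphi : is_character (fun t => psi (- t) * c t).
  case: cpsi => nzp mp; case: cc => nzc mc; split.
    by move=> x; rewrite mulf_neq0.
  by move=> x y; rewrite opprD mp mc mulrACA.
have := @char_sum _ _ _ cphi hs t => e.
by rewrite hc -[c t]mul1r -(@charN _ _ t cpsi) -mulrA e mulr1.
Qed.
End Exist.

Lemma hcommG p n m (B : 'I_m -> 'M['F_p]_n) (x y : heis B) :
  (x * y)%g = (y * x * hcent B (beta B x.1 y.1 - beta B y.1 x.1))%g.
Proof.
case: x y => [w s] [v t]; rewrite !hmulE /hcent /= beta0r !addr0; congr (_, _).
  by rewrite addrC.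
by rewrite [beta B w v - _]addrC addrA addrK (addrC s).
Qed.

Section Triv.
Variables (p n m : nat) (B : 'I_m -> 'M['F_p]_n).
Local Notation H := (heis B).
Local Notation G := [set: heis B]%G.
Variables (d : nat) (rho : mx_representation algC G d).

Lemma triv_center : mx_irreducible rho -> (forall t, rho (hcent B t) = 1%:M) ->
  d = 1%N /\ exists lam : 'rV['F_p]_n -> algC,
      is_character lam /\ forall h, rho h = (lam (hproj h))%:M.
Proof.
move=> irrr h1.
have d_gt0 : (0 < d)%N by case/mx_irrP: irrr.
have absirr : mx_absolutely_irreducible rho := group_closure_closed_field irrr.
pose i0 := Ordinal d_gt0.
have sc g : rho g = (rho g i0 i0)%:M.
  have /is_scalar_mxP[a ->] : is_scalar_mx (rho g).
    apply: mx_abs_irr_cent_scalar absirr _ _; apply/centgmxP => x _.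
    by rewrite -!rhoM hcommG rhoM h1 mulmx1.
  by rewrite mxE eqxx mulr1n.
split.
  pose U : 'M[algC]_d := delta_mx i0 i0.
  have modU : mxmodule rho U.
    apply/mxmoduleP => x _; rewrite (sc x) mul_mx_scalar.
    by apply: scalemx_sub; apply: submx_refl.
  have nzU : U != 0.
    apply/eqP => /matrixP/(_ i0 i0); rewrite !mxE !eqxx /= => /eqP.
    by rewrite oner_eq0.
  case/mx_irrP: irrr => _ /(_ U modU nzU); rewrite /row_full => /eqP rU.
  by rewrite -rU mxrank_delta.
exists (fun v => rho ((v, 0) : H) i0 i0); split.
  split.
    move=> v; apply/eqP => c0.
    have : rho ((v, 0) : H) *m rho (((v, 0) : H)^-1)%g = 1%:M.
      by rewrite -rhoM mulgV repr_mx1.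
    rewrite sc c0 (_ : (0 : algC)%:M = 0 :> 'M_d) ?mul0mx; last first.
      by apply/matrixP => i j; rewrite !mxE mul0rn.
    move/(congr1 (fun M : 'M_d => M i0 i0)); rewrite !mxE eqxx /= => /eqP.
    by rewrite eq_sym oner_eq0.
  move=> v w; have := @rhoM _ _ _ B _ rho ((v, 0) : H) ((w, 0) : H).
  rewrite hvV rhoM h1 mulmx1 (sc (v, 0)) (sc (w, 0)) -scalar_mxM => ->.
  by rewrite !mxE eqxx !mulr1n.
move=> h; rewrite {1}(@hdecomp _ _ _ B h) rhoM h1 mulmx1 /hproj.
exact: sc.
Qed.
End Triv.

Theorem proposition2p10 (p : nat) (p_pr : prime p) (n m : nat)
  (A B : 'I_m -> 'M['F_p]_n)
  (A_alt : forall i, alternating (A i))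
  (A_free : forall c : 'rV['F_p]_m, \sum_i c 0 i *: A i = 0 -> c = 0)
  (K_symp : symplectic A)
  (hB : forall v w, beta B v w - beta B w v = omega A v w) :
  (* (i) one 1-dimensional irreducible rep for each character of V *)
  (forall lam : 'rV['F_p]_n -> algC, is_character lam ->
     exists rho : mx_representation algC [set: heis B]%G 1,
       mx_irreducible rho /\ forall h, rho h = (lam (hproj h))%:M)
  /\ (forall (lam1 lam2 : 'rV['F_p]_n -> algC)
        (rho1 rho2 : mx_representation algC [set: heis B]%G 1),
        is_character lam1 -> is_character lam2 ->
        (forall h, rho1 h = (lam1 (hproj h))%:M) ->
        (forall h, rho2 h = (lam2 (hproj h))%:M) ->
        mx_rsim rho1 rho2 -> lam1 = lam2)
  (* (ii) for each nontrivial character psi of K^*, one irreducible rep of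
     dimension sqrt |V| on which the centre acts by psi, unique up to iso *)
  /\ (forall psi : 'rV['F_p]_m -> algC, is_character psi -> nontrivial_char psi ->
        exists d (rho : mx_representation algC [set: heis B]%G d),
          [/\ (d * d = #|{: 'rV['F_p]_n}|)%N, mx_irreducible rho,
              (forall t, rho (hcent B t) = (psi t)%:M) &
              forall d' (rho' : mx_representation algC [set: heis B]%G d'),
                mx_irreducible rho' -> (forall t, rho' (hcent B t) = (psi t)%:M) ->
                mx_rsim rho rho'])
  /\ (forall (psi1 psi2 : 'rV['F_p]_m -> algC) d1 d2
        (rho1 : mx_representation algC [set: heis B]%G d1)
        (rho2 : mx_representation algC [set: heis B]%G d2),
        is_character psi1 -> is_character psi2 ->
        nontrivial_char psi1 -> nontrivial_char psi2 ->
        (forall t, rho1 (hcent B t) = (psi1 t)%:M) ->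
        (forall t, rho2 (hcent B t) = (psi2 t)%:M) ->
        mx_irreducible rho1 -> mx_irreducible rho2 ->
        mx_rsim rho1 rho2 -> psi1 = psi2)
  (* (iii) there are no other irreducible reps *)
  /\ (forall d (rho : mx_representation algC [set: heis B]%G d), mx_irreducible rho ->
        (d = 1%N /\ exists lam : 'rV['F_p]_n -> algC,
                     is_character lam /\ forall h, rho h = (lam (hproj h))%:M)
        \/ (exists psi : 'rV['F_p]_m -> algC, is_character psi /\ nontrivial_char psi /\
              forall t, rho (hcent B t) = (psi t)%:M)).

Proof.
split.
  move=> lam clam.
  have lam0 := @char0 _ _ clam.
  have reprP : mx_repr [set: heis B]%G (fun h : heis B => (lam h.1)%:M : 'M[algC]_1).
    split; first by rewrite /= lam0.
    by move=> x y _ _; rewrite /= (proj2 clam) scalar_mxM.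
  exists (MxRepresentation reprP); split; last by [].
  by apply: mx_abs_irrW; apply: linear_mx_abs_irr.
split.
  move=> lam1 lam2 rho1 rho2 _ _ h1 h2 rs; apply: functional_extensionality => v.
  have := mx_rsim_scalar (in_setT ((v, 0) : heis B)) rs (h1 (v, 0)).
  by rewrite h2 => /matrixP/(_ 0 0); rewrite !mxE eqxx !mulr1n.
split.
  move=> psi cpsi npsi.
  have [d [rho [irrr hc]]] := @exists_rep _ _ _ B psi cpsi.
  have dsq := @dim_sq _ _ _ _ _ A_alt A_free K_symp hB _ rho psi irrr cpsi hc npsi.
  exists d, rho; split => // d' rho' irr' hc'.
  have dsq' := @dim_sq _ _ _ _ _ A_alt A_free K_symp hB _ rho' psi irr' cpsi hc' npsi.
  have dd : d = d'.
    have e : (d * d = d' * d')%N by rewrite dsq dsq'.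
    nia.
  subst d'.
  apply/cfRepr_rsimP; apply/eqP/cfunP => x.
  by rewrite (@cfRepr_heis _ _ _ _ _ A_alt A_free K_symp hB _ rho psi hc npsi)
     (@cfRepr_heis _ _ _ _ _ A_alt A_free K_symp hB _ rho' psi hc' npsi).
split.
  move=> psi1 psi2 d1 d2 rho1 rho2 _ _ _ _ h1 h2 _ irr2 rs.
  have d_gt0 : (0 < d2)%N by case/mx_irrP: irr2.
  apply: functional_extensionality => t.
  have := mx_rsim_scalar (in_setT (hcent B t)) rs (h1 t).
  rewrite h2 => /matrixP/(_ (Ordinal d_gt0) (Ordinal d_gt0)).
  by rewrite !mxE eqxx !mulr1n.
move=> d rho irrr.
have [c [cc hc]] := @center_scalar _ _ _ B d rho irrr.
case: (boolP [exists x, c x != 1]) => [/existsP nt | /existsPn all1].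
  by right; exists c.
left; apply: (@triv_center _ _ _ B d rho irrr) => t.
by rewrite hc (eqP (negbNE (all1 t))).
Qed.
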